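(* For all $k,m\in\mathbb{N}$, \[ Q(1,2k+1;2)=0\qquad\text{and}\qquad Q(m+1,2k-1;2)=0. \]
   Context: $s(n,k)$ ($n\ge k\ge 0$) denotes the signed Stirling numbers of the first kind, defined by $\frac{[\ln(1+x)]^k}{k!}=\sum_{n=k}^\infty s(n,k)\frac{x^n}{n!}$ for $|x|<1$; equivalently $\prod_{j=0}^{n-1}(z-j)=\sum_{k=0}^n s(n,k)z^k$. For $m\in\mathbb{N}$, $k\in\mathbb{N}_0$ and $\alpha\in\mathbb{R}$ define \[ Q(m,k;\alpha)=\sum_{\ell=0}^{k}\binom{m+\ell-1}{m-1}\, s(m+k-1,m+\ell-1)\left(\frac{m+k-\alpha}{2}\right)^{\ell}, \] with the convention $0^0=1$. *)

(* Defs.v *)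
From HB Require Import structures.
From mathcomp Require Import all_boot all_order all_algebra.
From mathcomp Require Import all_reals.
Set Implicit Arguments. Unset Strict Implicit. Unset Printing Implicit Defensive.
Import Order.TTheory GRing.Theory Num.Theory.
Local Open Scope ring_scope.

Definition stirling1 (n k : nat) : int :=
  (\prod_(j < n) ('X - (j%:R)%:P) : {poly int})`_k.

(* Q(m,k;alpha) = sum_{l=0}^k C(m+l-1, m-1) s(m+k-1, m+l-1) ((m+k-alpha)/2)^l,
   with 0^0 = 1 (as x ^+ 0 = 1). *)
Definition Q (R : realFieldType) (m k : nat) (alpha : R) : R :=
  \sum_(l < k.+1)
     ('C(m + l - 1, m - 1))%:R * (stirling1 (m + k - 1) (m + l - 1))%:~R
       * ((((m + k)%:R - alpha) / 2) ^+ l).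

(* Main.v *)
Require Import Defs.
From HB Require Import structures.
From mathcomp Require Import all_boot all_order all_algebra.
From mathcomp Require Import all_reals.
From mathcomp Require Import ring lra.
Import Order.TTheory GRing.Theory Num.Theory.
Local Open Scope ring_scope.

Section Aux.
Variable R : realFieldType.

Lemma coef_XaddCn (c : R) i n :
  (('X + c%:P) ^+ i)`_n = c ^+ (i - n) *+ 'C(i, n).
Proof.
rewrite addrC exprDn coef_sum.
under eq_bigr => j _ do rewrite coefMn -polyC_exp coefCM coefXn.
rewrite (eq_bigr (fun j : 'I_i.+1 => if (j == n :> nat) then c ^+ (i - n) *+ 'C(i, n) else 0)); last first.
  move=> j _; have [<-|ne] := eqVneq (j : nat) n; first by rewrite mulr1.
  by rewrite mulr0 mul0rn.
rewrite -big_mkcond /= (big_ord1_eq _ (fun _ => c ^+ (i - n) *+ 'C(i, n))) ltnS.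
by case: leqP => // H; rewrite bin_small.
Qed.

Definition Pst (N : nat) : {poly R} := \prod_(j < N) ('X - (j%:R)%:P).

Lemma stirling_Pst N i : (stirling1 N i)%:~R = (Pst N)`_i.
Proof.
rewrite /stirling1 -coef_map rmorph_prod; congr (_ `_ i).
rewrite /Pst. under eq_bigr => j _ do rewrite rmorphB /= map_polyX map_polyC /= rmorph_nat. by [].
Qed.

Lemma size_Pst N : size (Pst N) = N.+1.
Proof. by rewrite /Pst size_prod_XsubC /index_enum /= -enumT size_enum_ord. Qed.

Lemma Q_coef n K (a : R) :
  Q n.+1 K a = ((Pst (n + K)) \Po ('X + ((((n.+1 + K)%:R - a) / 2))%:P))`_n.
Proof.
set c := (((n.+1 + K)%:R - a) / 2).
rewrite coef_comp_poly size_Pst -addnS big_split_ord /=.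
rewrite big1 ?add0r; last first.
  by move=> i _; rewrite coef_XaddCn bin_small ?mulr0n ?mulr0.
rewrite /Q; apply: eq_bigr => l _.
rewrite coef_XaddCn stirling_Pst /c.
have -> : (n.+1 + l - 1 = n + l)%N by rewrite addSn subn1.
have -> : (n.+1 + K - 1 = n + K)%N by rewrite addSn subn1.
rewrite subn1 /= addKn mulrnAr mulr_natl mulrC.
by rewrite mulrnAr mulrC.
Qed.

Lemma coef_compN (q : {poly R}) n : (q \Po (- 'X))`_n = (-1) ^+ n * q`_n.
Proof.
rewrite coef_comp_poly.
under eq_bigr => i _ do rewrite -scaleN1r exprZn coefZ coefXn.
rewrite (eq_bigr (fun i : 'I_(size q) => if (i == n :> nat) then (-1) ^+ n * q`_n else 0)); last first.
  move=> j _; have [<-|ne] := eqVneq (j : nat) n; first by rewrite mulr1 mulrC.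
  by rewrite mulr0 mulr0.
rewrite -big_mkcond /= (big_ord1_eq _ (fun _ => (-1) ^+ n * q`_n)).
by case: ltnP => // H; rewrite nth_default // mulr0.
Qed.

Lemma Pst_shift_par N (c : R) : c *+ 2 = N%:R - 1 ->
  (Pst N \Po ('X + c%:P)) \Po (- 'X) = ((-1) ^+ N)%:P * (Pst N \Po ('X + c%:P)).
Proof.
move=> hc.
have E : Pst N \Po ('X + c%:P) = \prod_(j < N) ('X + (c - j%:R)%:P).
  rewrite /Pst rmorph_prod; apply: eq_bigr => j _.
  by rewrite /= comp_polyB comp_polyX comp_polyC polyCB addrA.
rewrite E rmorph_prod /=.
under eq_bigr => j _ do rewrite comp_polyD comp_polyX comp_polyC.
rewrite (reindex_inj rev_ord_inj) /=.
rewrite (eq_bigr (fun j : 'I_N => - ('X + (c - j%:R)%:P))); last first.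
  move=> j _; rewrite opprD -polyCN; congr (_ + _%:P).
  have hj : (j < N)%N := ltn_ord j.
  rewrite natrB // -addn1 natrD; move: hc; rewrite mulr2n => hc; lra.
by rewrite prodrN card_ord polyC_exp polyCN.
Qed.

Lemma Q_odd n K : odd K -> Q n.+1 K (2 : R) = 0.
Proof.
move=> hK; rewrite Q_coef.
set c := ((n.+1 + K)%:R - 2) / 2.
have hc : c *+ 2 = (n + K)%:R - 1.
  rewrite /c mulr2n addSn -addn1 natrD; field; done.
have := congr1 (fun q : {poly R} => q`_n) (@Pst_shift_par _ _ hc).
rewrite /= coef_compN coefCM exprD -(signr_odd _ K) hK expr1 mulrN1 mulNr => h.
have h2 : ((-1) ^+ n * (Pst (n + K) \Po ('X + c%:P))`_n) *+ 2 = 0.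
  by rewrite mulr2n {1}h addNr.
move/eqP: h2; rewrite mulrn_eq0 /= mulf_eq0 signr_eq0 /=.
by move/eqP.
Qed.

End Aux.

Theorem corollary2p2 (R : realType) (k m : nat) (hk : (1 <= k)%N) (hm : (1 <= m)%N) :
  Q (1%N) (2 * k + 1)%N (2 : R) = 0 /\ Q (m + 1)%N (2 * k - 1)%N (2 : R) = 0.
Proof.
split; first by apply: Q_odd; rewrite oddD oddM.
rewrite addn1; apply: Q_odd.
by case: k hk => // k _; rewrite mulnS add2n subn1 /= oddM.
Qed.
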